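(* Let $\mathcal{C}$ be an $[n,k,d]$ linear code over $\mathbb{F}_{q^m}$, $\mathcal{B}$ a basis of $\mathbb{F}_{q^m}$ over $\mathbb{F}_q$, and $u=(i_1,\dots,i_n)\in\{1,\dots,m\}^n$. Then $S_u(\mathcal{C})$ is an $[n,k',d']$ linear code over $\mathbb{F}_q$ with $k'\ge n-m(n-k)$ and $d'\ge d$. Moreover, any decoding algorithm for $\mathcal{C}$ correcting up to $t$ errors can be applied to $S_u(\mathcal{C})$ with the same error-correction capability: if $y\in\mathbb{F}_q^n$ differs from $c\in S_u(\mathcal{C})$ in at most $t$ positions, then inserting zeros at the positions $J_u$ of $y$ and of $c$ and applying $\Phi_{\mathcal{B}}^{-1}$ yields a word of $\mathbb{F}_{q^m}^n$ at Hamming distance at most $t$ from the codeword $\Phi_{\mathcal{B}}^{-1}$(c with zeros inserted) $\in\mathcal{C}$, from which $c$ is recovered.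
   Context: $\phi_{\mathcal{B}}(\sum_ix_ib_i)=(x_1,\dots,x_m)$, $\Phi_{\mathcal{B}}(c_1,\dots,c_n)=(\phi_{\mathcal{B}}(c_1),\dots,\phi_{\mathcal{B}}(c_n))\in\mathbb{F}_q^{nm}$, and $Im_q(\mathcal{C})=\Phi_{\mathcal{B}}(\mathcal{C})$, with positions numbered $1,\dots,nm$. Set $I_u=\{i_1,\ i_2+m,\ i_3+2m,\dots,\ i_n+(n-1)m\}$ and $J_u=\{1,\dots,nm\}\setminus I_u$. For $D\subseteq\mathbb{F}_q^{N}$ and $J\subseteq\{1,\dots,N\}$, $Short_J(D)=\{(x_j)_{j\notin J}:x\in D,\ x_j=0\ \forall j\in J\}$. Define $S_u(\mathcal{C})=Short_{J_u}(Im_q(\mathcal{C}))$. *)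

(* Defs.v *)
From HB Require Import structures.
From mathcomp Require Import all_boot all_order all_algebra all_field.
From mathcomp Require Import zify.
Set Implicit Arguments. Unset Strict Implicit. Unset Printing Implicit Defensive.
Import GRing.Theory.
Local Open Scope ring_scope.

Section Codes.

Definition hwt (K : nzRingType) (n : nat) (x : 'rV[K]_n) : nat :=
  #|[set j : 'I_n | x 0 j != 0]|.
Definition hdist (K : nzRingType) (n : nat) (x y : 'rV[K]_n) : nat :=
  #|[set j : 'I_n | x 0 j != y 0 j]|.

Definition is_nkd_code (K : fieldType) (n : nat) (C : {vspace 'rV[K]_n})
    (k d : nat) : Prop :=
  [/\ \dim C = k,
      (exists2 c, c \in C & (c != 0) && (hwt c == d))
    & (forall c, c \in C -> c != 0 -> (d <= hwt c)%N)].

Variables (n m : nat).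

(* 0-based flattening: position (j, i) of F_q^{nm} has number j*m + i
   (i.e. j*m + i + 1 in the paper's 1-based numbering). *)
Lemma flat_lt (j : 'I_n) (i : 'I_m) : (j * m + i < n * m)%N.
Proof.
have hj := ltn_ord j; have hi := ltn_ord i.
have : (j.+1 * m <= n * m)%N by rewrite leq_mul2r hj orbT.
rewrite mulSn; lia.
Qed.
Definition flat (j : 'I_n) (i : 'I_m) : 'I_(n * m) := Ordinal (flat_lt j i).

Lemma block_lt (p : 'I_(n * m)) : (p %/ m < n)%N.
Proof.
have hp := ltn_ord p; move: (nat_of_ord p) hp => q hp.
have hm : (0 < m)%N by case: (posnP m) hp => // ->; rewrite muln0.
by rewrite ltn_divLR.
Qed.
Lemma offset_lt (p : 'I_(n * m)) : (p %% m < m)%N.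
Proof.
have hp := ltn_ord p; move: (nat_of_ord p) hp => q hp.
have hm : (0 < m)%N by case: (posnP m) hp => // ->; rewrite muln0.
by rewrite ltn_mod.
Qed.
Definition block (p : 'I_(n * m)) : 'I_n := Ordinal (block_lt p).
Definition offset (p : 'I_(n * m)) : 'I_m := Ordinal (offset_lt p).

Variables (F : finFieldType) (L : fieldExtType F) (B : m.-tuple L).

Definition Phi (c : 'rV[L]_n) : 'rV[F]_(n * m) :=
  \row_p coord B (offset p) (c 0 (block p)).

Definition Phi_inv (z : 'rV[F]_(n * m)) : 'rV[L]_n :=
  \row_j \sum_(i < m) z 0 (flat j i) *: tnth B i.

Definition Im_q (C : {vspace 'rV[L]_n}) (y : 'rV[F]_(n * m)) : Prop :=
  exists2 c, c \in C & y = Phi c.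

Variable u : 'I_n -> 'I_m.

Definition I_u : {set 'I_(n * m)} := [set flat j (u j) | j : 'I_n].
Definition J_u : {set 'I_(n * m)} := ~: I_u.

(* The positions not in J_u, in increasing order, are flat j (u j), j = 0..n-1;
   restricting a word to them: *)
Definition restr_u (y : 'rV[F]_(n * m)) : 'rV[F]_n := \row_j y 0 (flat j (u j)).

Definition Short_u (D : 'rV[F]_(n * m) -> Prop) (x : 'rV[F]_n) : Prop :=
  exists2 y, D y & (forall p, p \in J_u -> y 0 p = 0) /\ x = restr_u y.

Definition S_u (C : {vspace 'rV[L]_n}) : 'rV[F]_n -> Prop := Short_u (Im_q C).

Definition ins_u (x : 'rV[F]_n) : 'rV[F]_(n * m) :=
  \row_p (if p \in I_u then x 0 (block p) else 0).

End Codes.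

(* Main.v *)
Require Import Defs.
From HB Require Import structures.
From mathcomp Require Import all_boot all_order all_algebra all_field.
From mathcomp Require Import zify.
Import GRing.Theory.
Local Open Scope ring_scope.

Section Help.
Variables (F : finFieldType) (L : fieldExtType F) (m n : nat) (B : m.-tuple L).
Variable (u : 'I_n -> 'I_m).
Hypothesis hB : basis_of fullv B.

Lemma block_flat (j : 'I_n) (i : 'I_m) : block (flat j i) = j.
Proof.
apply: val_inj => /=; have hi := ltn_ord i.
by rewrite divnMDl ?divn_small ?addn0 //; lia.
Qed.

Lemma offset_flat (j : 'I_n) (i : 'I_m) : offset (flat j i) = i.
Proof. by apply: val_inj => /=; rewrite modnMDl modn_small. Qed.

Lemma flat_bo (p : 'I_(n * m)) : flat (block p) (offset p) = p.
Proof. by apply: val_inj => /=; rewrite -divn_eq. Qed.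

Lemma ins_flat (x : 'rV[F]_n) (j : 'I_n) (i : 'I_m) :
  ins_u u x 0 (flat j i) = if i == u j then x 0 j else 0.
Proof.
rewrite mxE block_flat; case: eqP => [->|ne].
  by have -> : flat j (u j) \in I_u u by apply/imsetP; exists j.
case: ifP => // /imsetP [j' _ e].
have := congr1 (@block _ _) e; rewrite !block_flat => ejj.
have := congr1 (@offset _ _) e; rewrite !offset_flat => eij.
by case: ne; rewrite eij ejj.
Qed.

Lemma Phi_inv_ins (x : 'rV[F]_n) (j : 'I_n) :
  Phi_inv B (ins_u u x) 0 j = x 0 j *: tnth B (u j).
Proof.
rewrite mxE (bigD1 (u j)) //= big1 ?addr0 ?ins_flat ?eqxx //.
by move=> i /negbTE ne; rewrite ins_flat ne scale0r.
Qed.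

Lemma coordB_sum (a : 'I_m -> F) i : coord B i (\sum_i' a i' *: tnth B i') = a i.
Proof.
rewrite linear_sum (bigD1 i) //= big1 ?addr0.
  by rewrite linearZ /= (tnth_nth 0) coord_free ?(basis_free hB) // eqxx mulr1.
by move=> i' ne; rewrite linearZ /= (tnth_nth 0) coord_free ?(basis_free hB) // (negbTE ne) mulr0.
Qed.

Lemma Phi_invK (z : 'rV[F]_(n * m)) : Phi B (Phi_inv B z) = z.
Proof.
apply/rowP => p; rewrite !mxE /= coordB_sum.
by rewrite flat_bo.
Qed.

Lemma PhiK (c : 'rV[L]_n) : Phi_inv B (Phi B c) = c.
Proof.
apply/rowP => j; rewrite !mxE.
rewrite [RHS](coord_basis hB (memvf (c 0 j))).
apply: eq_bigr => i _; rewrite mxE block_flat offset_flat (tnth_nth 0) //.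
Qed.

Lemma restr_ins (x : 'rV[F]_n) : restr_u u (ins_u u x) = x.
Proof. by apply/rowP => j; rewrite mxE ins_flat eqxx. Qed.

Lemma S_uP C (x : 'rV[F]_n) : S_u B u C x <-> Phi_inv B (ins_u u x) \in C.
Proof.
split.
  case=> y [c cC ->] [hz ->].
  suff -> : ins_u u (restr_u u (Phi B c)) = Phi B c by rewrite PhiK.
  apply/rowP => p; rewrite -(flat_bo p) ins_flat.
  case: eqP => [->|ne]; first by rewrite mxE.
  rewrite hz // /J_u inE; apply/imsetP => -[j _ e].
  have := congr1 (@block _ _) e; rewrite !block_flat => ejj.
  have := congr1 (@offset _ _) e; rewrite !offset_flat -ejj => eij.
  by case: ne.
move=> h; exists (ins_u u x); first by exists (Phi_inv B (ins_u u x)); rewrite ?Phi_invK.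
split; last by rewrite restr_ins.
by move=> p; rewrite /J_u inE mxE => /negbTE ->.
Qed.

Lemma tnthB_neq0 i : tnth B i != 0.
Proof.
apply/eqP => e; have := coord_free i i (basis_free hB).
by rewrite -(tnth_nth 0) e linear0 eqxx => /eqP; rewrite eq_sym oner_eq0.
Qed.

Lemma hwt_ins (x : 'rV[F]_n) : hwt (Phi_inv B (ins_u u x)) = hwt x.
Proof.
rewrite /hwt; apply: eq_card => j; rewrite !inE Phi_inv_ins.
by rewrite scaler_eq0 negb_or tnthB_neq0 andbT.
Qed.

Lemma hdist_ins (x y : 'rV[F]_n) : hdist (Phi_inv B (ins_u u x)) (Phi_inv B (ins_u u y)) = hdist x y.
Proof.
rewrite /hdist; apply: eq_card => j; rewrite !inE !Phi_inv_ins.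
congr negb; apply/eqP/eqP => [|->] //.
move/eqP; rewrite -subr_eq0 -scalerBl scaler_eq0 (negbTE (tnthB_neq0 _)) orbF subr_eq0.
by move/eqP.
Qed.

End Help.
Section Dim.
Variables (F : finFieldType) (L : fieldExtType F) (m n : nat) (B : m.-tuple L).
Variable (u : 'I_n -> 'I_m).
Hypothesis hB : basis_of fullv B.
Variable C : {vspace 'rV[L]_n}.

Definition hC (w : 'rV[L]_n) := w - projv C w.
Definition phiC (l : 'I_(\dim (C^C))) (w : 'rV[L]_n) := coord (vbasis (C^C)) l (hC w).

Lemma phiC_lin l (k : L) v w : phiC l (k *: v + w) = k * phiC l v + phiC l w.
Proof.
rewrite /phiC; have -> : hC (k *: v + w) = k *: hC v + hC w.
  by rewrite /hC linearP /= scalerBr addrACA opprD.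
by rewrite linearP.
Qed.

Lemma phiC0P w : (forall l, phiC l w = 0) <-> w \in C.
Proof.
split => [h | wC l].
  have hw : hC w = 0.
    rewrite /hC (coord_vbasis (memv_projC C w)); apply: big1 => l _.
    by have := h l; rewrite /phiC /hC => ->; rewrite scale0r.
  by move/eqP: hw; rewrite /hC subr_eq0 => /eqP ->; apply: memv_proj.
by rewrite /phiC /hC projv_id // subrr linear0.
Qed.

Lemma coordB0P (z : L) : (forall i, coord B i z = 0) <-> z = 0.
Proof.
split => [h | -> i]; last by rewrite linear0.
rewrite (coord_basis hB (memvf z)); apply: big1 => i _.
by rewrite h scale0r.
Qed.

Definition fC (x : 'rV[F]_n) : 'M[F]_(\dim (C^C), m) :=
  \matrix_(l, i) coord B i (phiC l (Phi_inv B (ins_u u x))).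

Lemma fC_lin : linear fC.
Proof.
move=> a x y; apply/matrixP => l i; rewrite !mxE.
have -> : Phi_inv B (ins_u u (a *: x + y)) =
   a%:A *: Phi_inv B (ins_u u x) + Phi_inv B (ins_u u y).
  apply/rowP => j; rewrite Phi_inv_ins // [RHS]mxE [X in _ = X + _]mxE !Phi_inv_ins // !mxE.
  by rewrite mulr_algl scalerA scalerDl.
by rewrite phiC_lin mulr_algl !linearP.
Qed.

Definition fCL : {linear 'rV[F]_n -> 'M[F]_(\dim (C^C), m)} :=
  HB.pack fC (GRing.isLinear.Build _ _ _ _ fC fC_lin).

Definition SC : {vspace 'rV[F]_n} := lker (linfun fCL).

Lemma SCP x : x \in SC <-> Phi_inv B (ins_u u x) \in C.
Proof.
rewrite memv_ker lfunE /=; split.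
  move/eqP/matrixP => h; apply/phiC0P => l; apply/coordB0P => i.
  by have := h l i; rewrite !mxE.
move/phiC0P => h; apply/eqP/matrixP => l i; rewrite !mxE h.
by rewrite linear0.
Qed.

Lemma SC_dim k : \dim C = k -> (n - m * (n - k) <= \dim SC)%N.
Proof.
move=> dC.
have hk := limg_ker_dim (linfun fCL) fullv; rewrite capfv in hk.
have hl := dimvS (subvf (limg (linfun fCL))); rewrite dimvf in hl.
have e1 : \dim (C^C) = (n - k)%N.
  by rewrite dimv_compl dimvf dC; rewrite [dim _]mul1n.
move: hk hl; rewrite /SC; move: (\dim (limg (linfun fCL))) => a hk hl.
rewrite [dim _](_ : _ = \dim (C^C) * m)%N // e1 in hl.
rewrite dimvf [dim _]mul1n in hk.
move: (\dim (lker _)) hk => D hk; rewrite mulnC; move: (n - k)%N hl => t hl.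
lia.
Qed.
End Dim.

Theorem proposition4 (F : finFieldType) (L : fieldExtType F) (m : nat)
    (B : m.-tuple L) (n k d : nat) (C : {vspace 'rV[L]_n}) (u : 'I_n -> 'I_m) :
  basis_of fullv B ->
  is_nkd_code C k d ->
  (exists S : {vspace 'rV[F]_n},
      [/\ forall x, x \in S <-> S_u B u C x,
          (n - m * (n - k) <= \dim S)%N
        & forall x, x \in S -> x != 0 -> (d <= hwt x)%N])
  /\
  (forall (t : nat) (Dec : 'rV[L]_n -> 'rV[L]_n),
      (forall c w, c \in C -> (hdist w c <= t)%N -> Dec w = c) ->
      forall (c y : 'rV[F]_n), S_u B u C c -> (hdist y c <= t)%N ->
      [/\ Phi_inv B (ins_u u c) \in C,
          (hdist (Phi_inv B (ins_u u y)) (Phi_inv B (ins_u u c)) <= t)%N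
        & restr_u u (Phi B (Dec (Phi_inv B (ins_u u y)))) = c]).
Proof.
move=> hB [dC _ hmin].
have SCP' := @SCP _ _ _ _ B u hB C.
have S_uP' := @S_uP _ _ _ _ B u hB C.
have hwt' := @hwt_ins _ _ _ _ B u hB.
have hd' := @hdist_ins _ _ _ _ B u hB.
have PK := @Phi_invK _ _ _ _ B hB.
have RI := @restr_ins _ _ _ _ B u hB.
split.
  exists (@SC _ _ _ _ B u hB C); split.
  - by move=> x; split => [/SCP' /S_uP'|/S_uP' /SCP'].
  - exact: SC_dim.
  - move=> x /SCP' xC nz; rewrite -hwt'; apply: hmin => //.
    apply/eqP => e; move/eqP: nz; apply.
    rewrite -(RI x) -[ins_u u x]PK e.
    by apply/rowP => j; rewrite !mxE linear0.
move=> t Dec hDec c y Sc hyc.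
have cC := (S_uP' c).1 Sc.
split => //; first by rewrite hd'.
by rewrite (hDec _ _ cC) ?hd' // PK RI.
Qed.
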